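(* Let $\mathbf Q\in\mathbb R^{m\times d}$, $\mathbf K,\mathbf V\in\mathbb R^{n\times d}$ and $\beta>0$, and let $\mathbf A$, $\mathbf D$, $\mathbf O$ be as in the context. Let $\widehat{\mathbf A}\in\mathbb R^{m\times n}$ be any approximation to $\mathbf A$, let $\widehat{\mathbf D}=\mathrm{diag}(\widehat{\mathbf A}\mathbf 1_n)$, and let $\widehat{\mathbf O}\defeq\mathrm{clip}(\widehat{\mathbf D}^{-1}\widehat{\mathbf A}\mathbf V,\mathbf v_{\min},\mathbf v_{\max})$, where $(\mathbf v_{\min})_j=\min_{l\in[n]}\mathbf V_{lj}$ and $(\mathbf v_{\max})_j=\max_{l\in[n]}\mathbf V_{lj}$. Then $$\|\mathbf O-\widehat{\mathbf O}\|_{\max}\le \|\mathbf V\|_{\max}\,\min\left(\frac{\frac{3}{\sqrt n}\|\mathbf A-\widehat{\mathbf A}\|_{2,\infty}}{\min_{i\in[m],j\in[n]}\mathbf A_{ij}},\,2\right).$$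
   Context: Queries $\mathbf Q\in\mathbb R^{m\times d}$ have rows $\mathbf q_1,\dots,\mathbf q_m$; keys $\mathbf K\in\mathbb R^{n\times d}$ have rows $\mathbf k_1,\dots,\mathbf k_n$; values $\mathbf V\in\mathbb R^{n\times d}$ have rows $\mathbf v_1,\dots,\mathbf v_n$. The attention matrix is $\mathbf A\in\mathbb R^{m\times n}$ with $\mathbf A_{il}=\exp(\beta\langle\mathbf q_i,\mathbf k_l\rangle)$, $\mathbf D=\mathrm{diag}(\mathbf A\mathbf 1_n)$, and the softmax matrix is $\mathbf O=\mathbf D^{-1}\mathbf A\mathbf V$. $\mathrm{clip}(\mathbf M,\mathbf a,\mathbf b)$ clips each entry $\mathbf M_{ij}$ to the interval $[\mathbf a_j,\mathbf b_j]$. Norms: $\|\mathbf M\|_{\max}=\max_{i,j}|\mathbf M_{ij}|$ and $\|\mathbf M\|_{2,\infty}=\max_i\|\mathbf M_{i,:}\|_2$ (maximal Euclidean row norm). *)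

(* Defs.v *)
From HB Require Import structures.
From mathcomp Require Import all_boot all_order all_algebra.
From mathcomp Require Import all_boot all_order all_algebra.
From mathcomp Require Import all_classical all_reals all_analysis.
Set Implicit Arguments. Unset Strict Implicit. Unset Printing Implicit Defensive.
Import Order.TTheory GRing.Theory Num.Theory.
Local Open Scope ring_scope.

Section Defs.
Variable R : realType.

Definition attn (m n d : nat) (beta : R) (Q : 'M[R]_(m, d)) (K : 'M[R]_(n, d))
  : 'M[R]_(m, n) :=
  \matrix_(i, l) expR (beta * \sum_(k < d) Q i k * K l k).

Definition rowsum_diag (m n : nat) (M : 'M[R]_(m, n)) : 'M[R]_m :=
  diag_mx (\row_(i < m) \sum_(l < n) M i l).

Definition clip (m d : nat) (M : 'M[R]_(m, d)) (a b : 'rV[R]_d) : 'M[R]_(m, d) :=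
  \matrix_(i, j) Num.min (Num.max (M i j) (a 0 j)) (b 0 j).

Definition colmin (n d : nat) (V : 'M[R]_(n.+1, d)) : 'rV[R]_d :=
  \row_j \big[Num.min/ V ord0 j]_(l < n.+1) V l j.
Definition colmax (n d : nat) (V : 'M[R]_(n.+1, d)) : 'rV[R]_d :=
  \row_j \big[Num.max/ V ord0 j]_(l < n.+1) V l j.

Definition minentry (m n : nat) (M : 'M[R]_(m.+1, n.+1)) : R :=
  \big[Num.min/ M ord0 ord0]_(i < m.+1) \big[Num.min/ M ord0 ord0]_(j < n.+1) M i j.

Definition maxnorm (m n : nat) (M : 'M[R]_(m, n)) : R :=
  \big[Num.max/0]_(i < m) \big[Num.max/0]_(j < n) `|M i j|.

Definition norm2inf (m n : nat) (M : 'M[R]_(m, n)) : R :=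
  \big[Num.max/0]_(i < m) Num.sqrt (\sum_(j < n) M i j ^+ 2).

End Defs.

(* Main.v *)
Require Import Defs.
From HB Require Import structures.
From mathcomp Require Import all_boot all_order all_algebra.
From mathcomp Require Import all_boot all_order all_algebra.
From mathcomp Require Import all_classical all_reals all_analysis.
From mathcomp Require Import ring lra.
Import Order.TTheory GRing.Theory Num.Theory.
Local Open Scope ring_scope.

Lemma aux (R : realType) (S p q M a b z : R) : 0 < S -> 0 <= p -> 0 <= q ->
  0 <= a -> 0 <= b -> a + b <= 2 * M -> 3 * (p + q) < 2 * S ->
  z * (S - p + q) <= p * a + q * b -> Num.min z b <= 3 * M * (p + q) / S.
Proof.
move=> S0 p0 q0 a0 b0 ab pq hz.
have M0 : 0 <= M by lra.
have Sh : 0 < S - p + q by lra.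
rewrite ler_pdivlMr //.
case: (lerP (b * S) (3 * M * (p + q))) => hb.
  rewrite (le_trans _ hb) //. by rewrite ler_wpM2r ?ge_min ?lexx ?orbT // ltW.
have key : (p * a + q * b) * S <= 3 * M * (p + q) * (S - p + q).
  have a2 : a <= 2 * M - b by lra.
  have e1 : p * a * S <= p * (2 * M - b) * S.
    by rewrite ler_wpM2r ?(ltW S0) // ler_wpM2l.
  have b2 : b <= 2 * M by lra.
  case: (lerP q p) => hpq.
    have : 3 * M * (p + q) * (p - q) <= b * S * (p - q).
      by rewrite ler_wpM2r ?subr_ge0 // ltW.
    have : 0 <= M * S * (p + 3 * q) by rewrite !mulr_ge0 ?(ltW S0) //; lra.
    nra.
  have : 2 * M * S * (p - q) <= b * S * (p - q).
    have : 0 <= (2 * M - b) * S * (q - p).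
      by rewrite !mulr_ge0 ?(ltW S0) //; lra.
    move=> h; lra.
  have : 0 <= M * S * (3 * p + q) by rewrite !mulr_ge0 ?(ltW S0) //; lra.
  have : 0 <= M * (q - p) * (q + p) by rewrite !mulr_ge0 //; lra.
  nra.
have hz2 : z * S <= 3 * M * (p + q).
  have : z * (S - p + q) * S <= 3 * M * (p + q) * (S - p + q).
    apply: le_trans key. by rewrite ler_wpM2r // ltW.
  move=> h. have : z * S * (S - p + q) <= 3 * M * (p + q) * (S - p + q) by nra.
  by rewrite ler_pM2r.
apply: le_trans hz2. by rewrite ler_wpM2r ?ge_min ?lexx // ltW.
Qed.

Lemma clip_bound (R : realType) (S p q M O x vmin vmax : R) : 0 < S -> 0 <= p -> 0 <= q ->
  vmin <= O -> O <= vmax -> - M <= vmin -> vmax <= M -> 3 * (p + q) < 2 * S ->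
  - (p * (vmax - O) + q * (O - vmin)) <= (x - O) * (S - p + q) ->
  (x - O) * (S - p + q) <= p * (O - vmin) + q * (vmax - O) ->
  `|O - Num.min (Num.max x vmin) vmax| <= 3 * M * (p + q) / S.
Proof.
move=> S0 p0 q0 h1 h2 h3 h4 pq l1 l2.
have r0 : 0 <= M by lra.
case: (lerP O x) => hx.
  have := @aux R S p q M (O - vmin) (vmax - O) (x - O) S0 p0 q0.
  rewrite ge_min => /(_ ltac:(lra) ltac:(lra) ltac:(lra) pq l2).
  have -> : Num.max x vmin = x by rewrite max_l // (le_trans h1).
  case/orP => hh; case: (lerP x vmax) => hv.
  - rewrite ler_norml; lra.
  - rewrite ler_norml; lra.
  - rewrite ler_norml; lra.
  - rewrite ler_norml; lra.
have := @aux R S p q M (vmax - O) (O - vmin) (O - x) S0 p0 q0.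
rewrite ge_min => /(_ ltac:(lra) ltac:(lra) ltac:(lra) pq ltac:(lra)).
have hm : forall y, y <= O -> Num.min y vmax = y by move=> y hy; rewrite min_l // (le_trans hy).
case/orP => hh; case: (lerP x vmin) => hv.
- rewrite hm; last lra; rewrite ler_norml; lra.
- rewrite hm; last lra; rewrite ler_norml; lra.
- rewrite hm; last lra; rewrite ler_norml; lra.
- rewrite hm; last lra; rewrite ler_norml; lra.
Qed.

Lemma cs (R : realType) N (x : 'I_N -> R) :
  (\sum_l x l) ^+ 2 <= N%:R * \sum_l x l ^+ 2.
Proof.
set S := \sum_l x l; set Q := \sum_l x l ^+ 2.
have H0 : 0 <= \sum_l \sum_k (x l - x k) ^+ 2.
  by apply: sumr_ge0 => l _; apply: sumr_ge0 => k _; apply: sqr_ge0.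
have inner : forall l, \sum_k (x l - x k) ^+ 2 = N%:R * x l ^+ 2 - 2 * x l * S + Q.
  move=> l.
  rewrite (eq_bigr (fun k => (x l ^+ 2 - 2 * x l * x k) + x k ^+ 2)); last by move=> k _; ring.
  rewrite big_split sumrB /= sumr_const card_ord -mulr_sumr /S /Q.
  rewrite -mulr_natl. ring.
rewrite (eq_bigr _ (fun l _ => inner l)) in H0.
rewrite big_split sumrB /= sumr_const card_ord in H0.
rewrite -mulr_sumr -big_distrl /= -/S -/Q -mulr_natl in H0.
have : 0 <= N%:R * Q - 2 * S * S + N%:R * Q.
  apply: le_trans H0 _.
  rewrite -mulr_sumr -/S -mulr_natr le_eqVlt; apply/orP; left; apply/eqP; ring.
move=> h; nra.
Qed.

Lemma invmx_diag (R : fieldType) k (dd : 'rV[R]_k) : (forall i, dd 0 i != 0) ->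
  invmx (diag_mx dd) = diag_mx (\row_i (dd 0 i)^-1).
Proof.
move=> h.
have H : diag_mx dd *m diag_mx (\row_i (dd 0 i)^-1) = 1%:M.
  rewrite mulmx_diag; apply/matrixP => i j; rewrite !mxE.
  case: eqP => [->|]; last by rewrite !mulr0n ?mulr0.
  by rewrite mulfV // mulr1n.
have [u _] := mulmx1_unit H.
by rewrite -[RHS](mulKmx u) H mulmx1.
Qed.

Lemma entry_formula (R : realType) m n d (M : 'M[R]_(m, n)) (V : 'M[R]_(n, d)) :
  (forall i, \sum_l M i l != 0) -> forall i j,
  (invmx (rowsum_diag M) *m M *m V) i j = (\sum_l M i l * V l j) / \sum_l M i l.
Proof.
move=> h i j.
rewrite /rowsum_diag invmx_diag; last by move=> i'; rewrite mxE.
rewrite mul_diag_mx mxE mulrC mulr_sumr; apply: eq_bigr => l _.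
by rewrite !mxE mulrA.
Qed.

Lemma clip_entry (R : realType) m d (X : 'M[R]_(m, d)) (a b : 'rV[R]_d) i j :
  clip X a b i j = Num.min (Num.max (X i j) (a 0 j)) (b 0 j).
Proof. by rewrite /clip mxE. Qed.

Lemma subE (R : realType) m d (X Y : 'M[R]_(m, d)) i j : (X - Y) i j = X i j - Y i j.
Proof. by rewrite !mxE. Qed.

Lemma term_bd (R : realType) (e O v lo hi : R) : lo <= v -> v <= hi ->
  e * (O - v) <= (`|e| + e) / 2 * (O - lo) + (`|e| - e) / 2 * (hi - O) /\
  - ((`|e| + e) / 2 * (hi - O) + (`|e| - e) / 2 * (O - lo)) <= e * (O - v).
Proof.
move=> h1 h2; have [he|he] := lerP 0 e.
  rewrite ger0_norm //; split; nra.
rewrite ltr0_norm //; split; nra.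
Qed.

Lemma pq_ge0 (R : realType) (e : R) : 0 <= (`|e| + e) / 2 /\ 0 <= (`|e| - e) / 2.
Proof.
have [he|he] := lerP 0 e; [rewrite ger0_norm // | rewrite ltr0_norm //]; split; lra.
Qed.

Theorem lemma1 (R : realType) (m n d : nat) (beta : R)
    (Q : 'M[R]_(m.+1, d)) (K V : 'M[R]_(n.+1, d)) (Ahat : 'M[R]_(m.+1, n.+1)) :
  0 < beta ->
  let A := attn beta Q K in
  let D := rowsum_diag A in
  let O := invmx D *m A *m V in
  let Dhat := rowsum_diag Ahat in
  let Ohat := clip (invmx Dhat *m Ahat *m V) (colmin V) (colmax V) in
  maxnorm (O - Ohat) <=
    maxnorm V * Num.min
      ((3 / Num.sqrt (n.+1)%:R) * norm2inf (A - Ahat) / minentry A) 2.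
Proof.
move=> _; cbv zeta.
set A := attn beta Q K.
set Om := invmx (rowsum_diag A) *m A *m V.
set Oh := clip _ _ _.
set N := n.+1.
set M := maxnorm V.
set mu := minentry A.
set r := norm2inf (A - Ahat).
set T := 3 / Num.sqrt N%:R * r / mu.
have Apos : forall i l, 0 < A i l by move=> i l; rewrite /A /attn mxE expR_gt0.
have mu_le : forall i l, mu <= A i l.
  move=> i l; rewrite /mu /minentry.
  apply: le_trans (bigmin_le _ i _) _; exact: bigmin_le.
have mu_pos : 0 < mu.
  rewrite /mu /minentry; apply: (big_ind (fun y => 0 < y)) => //.
  - by move=> x y hx hy; rewrite lt_min hx hy.
  move=> i _; apply: (big_ind (fun y => 0 < y)) => //.
  by move=> x y hx hy; rewrite lt_min hx hy.
set S := fun i => \sum_l A i l.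
set E1 := fun i => \sum_l `|(A - Ahat) i l|.
have S_ge : forall i, N%:R * mu <= S i.
  move=> i; have <- : \sum_(l < N) mu = N%:R * mu by rewrite sumr_const card_ord mulr_natl.
  apply: ler_sum => l _; exact: mu_le.
have S_pos : forall i, 0 < S i.
  move=> i; apply: lt_le_trans (S_ge i); rewrite mulr_gt0 // ltr0n.
have r_ge : forall i, Num.sqrt (\sum_l (A - Ahat) i l ^+ 2) <= r.
  move=> i; rewrite /r /norm2inf.
  exact: (le_bigmax _ (fun i => Num.sqrt (\sum_(j < N) (A - Ahat) i j ^+ 2)) i).
have r0 : 0 <= r by apply: le_trans (r_ge ord0); exact: sqrtr_ge0.
set s := Num.sqrt (N%:R : R).
have s_pos : 0 < s by rewrite sqrtr_gt0 ltr0n.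
have sN : s ^+ 2 = N%:R by rewrite sqr_sqrtr // ler0n.
have E1_le : forall i, E1 i <= s * r.
  move=> i.
  have E0 : 0 <= E1 i by apply: sumr_ge0 => l _; exact: normr_ge0.
  rewrite -(ger0_norm E0) -sqrtr_sqr.
  have h := @cs _ _ (fun l => `|(A - Ahat) i l|).
  have h2 := ler_wsqrtr h.
  apply: le_trans h2 _.
  rewrite sqrtrM ?ler0n // ler_wpM2l ?sqrtr_ge0 //.
  apply: le_trans (r_ge i).
  apply: ler_wsqrtr; rewrite le_eqVlt; apply/orP; left; apply/eqP.
  by apply: eq_bigr => l _; rewrite real_normK // num_real.
have T0 : 0 <= T by rewrite /T !mulr_ge0 ?invr_ge0 ?sqrtr_ge0 // ltW.
have hT : forall i, 3 * E1 i / S i <= T.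
  move=> i; rewrite ler_pdivrMr //.
  apply: (le_trans _ (ler_wpM2l T0 (S_ge i))).
  have -> : T * (N%:R * mu) = 3 * (s * r).
    rewrite /T -/s -sN; field; rewrite ?gt_eqF //=.
  by rewrite ler_wpM2l // E1_le.
have Vmin : forall l j, colmin V 0 j <= V l j.
  by move=> l j; rewrite /colmin mxE; exact: bigmin_le.
have Vmax : forall l j, V l j <= colmax V 0 j.
  by move=> l j; rewrite /colmax mxE; exact: (le_bigmax _ (fun l => V l j) l).
have VM : forall l j, `|V l j| <= M.
  move=> l j; rewrite /M /maxnorm.
  apply: le_trans (le_bigmax _ (fun i => \big[Num.max/0]_(j < d) `|V i j|) l).
  exact: (le_bigmax _ (fun j => `|V l j|) j).
have VM' : forall l j, - M <= V l j /\ V l j <= M.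
  by move=> l j; have := VM l j; rewrite ler_norml => /andP.
have minM : forall j, - M <= colmin V 0 j.
  move=> j; rewrite /colmin mxE; apply: le_bigmin; first by case: (VM' ord0 j).
  by move=> l _; case: (VM' l j).
have maxM : forall j, colmax V 0 j <= M.
  move=> j; rewrite /colmax mxE; apply: bigmax_le; first by case: (VM' ord0 j).
  by move=> l _; case: (VM' l j).
have M0 : 0 <= M.
  rewrite /M /maxnorm; apply: (big_ind (fun y => 0 <= y)) => //.
    by move=> x y hx hy; rewrite le_max hx.
  move=> i _; apply: (big_ind (fun y => 0 <= y)) => //.
  by move=> x y hx hy; rewrite le_max hx.
have cl : forall x lo hi : R, lo <= hi -> lo <= Num.min (Num.max x lo) hi <= hi.
  move=> x lo hi h.
  by rewrite le_min le_max lexx orbT h ge_min lexx orbT.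
have Oh_range : forall i j, colmin V 0 j <= Oh i j <= colmax V 0 j.
  move=> i j; rewrite /Oh clip_entry; apply: cl.
  exact: le_trans (Vmin ord0 j) (Vmax ord0 j).
have Om_eq : forall i j, Om i j = (\sum_l A i l * V l j) / S i.
  move=> i j; rewrite /Om entry_formula //.
  by move=> i'; rewrite gt_eqF // (S_pos i').
have Om_range : forall i j, colmin V 0 j <= Om i j <= colmax V 0 j.
  move=> i j; rewrite Om_eq ler_pdivlMr // ler_pdivrMr // /S !mulr_sumr.
  apply/andP; split; apply: ler_sum => l _; rewrite mulrC.
    by rewrite ler_pM2l.
  by rewrite ler_pM2r.
have triv : forall i j, `|Om i j - Oh i j| <= 2 * M.
  move=> i j; have := Om_range i j; have := Oh_range i j.
  have := minM j; have := maxM j.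
  move=> h1 h2 /andP[h3 h4] /andP[h5 h6]; rewrite ler_norml; apply/andP; split; lra.
suff entry : forall i j, `|Om i j - Oh i j| <= M * Num.min T 2.
  have h0 : 0 <= M * Num.min T 2.
    by apply: mulr_ge0 => //; case: (lerP T 2).
  rewrite /maxnorm; apply: bigmax_le => // i _.
  apply: bigmax_le => // j _; rewrite subE; exact: entry.
move=> i j.
case: (boolP [exists i', 2 <= 3 * E1 i' / S i']).
  move/existsP => [i' hi'].
  have T2 : 2 <= T := le_trans hi' (hT i').
  by rewrite min_r // mulrC; exact: triv.
rewrite negb_exists => /forallP hall.
have hlt : forall i', 3 * E1 i' < 2 * S i'.
  by move=> i'; have := hall i'; rewrite -ltNge ltr_pdivrMr // mulrC.
have sumAh : forall i', \sum_l Ahat i' l = S i' - \sum_l (A - Ahat) i' l.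
  move=> i'; rewrite /S -sumrB; apply: eq_bigr => l _; rewrite subE; ring.
have Sh_pos : forall i', 0 < \sum_l Ahat i' l.
  move=> i'; rewrite sumAh.
  have h1 := ler_norm_sum (index_enum 'I_N) (fun l => (A - Ahat) i' l) xpredT.
  have h2 := ler_norm (\sum_l (A - Ahat) i' l).
  have h3 := hlt i'. have h4 := S_pos i'.
  rewrite -/(E1 i') in h1. lra.
have X_eq : (invmx (rowsum_diag Ahat) *m Ahat *m V) i j
    = (\sum_l Ahat i l * V l j) / \sum_l Ahat i l.
  by rewrite entry_formula // => i'; rewrite gt_eqF.
set e := fun l => (A - Ahat) i l.
set p := \sum_l (`|e l| + e l) / 2.
set q := \sum_l (`|e l| - e l) / 2.
have p0 : 0 <= p by apply: sumr_ge0 => l _; case: (@pq_ge0 R (e l)).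
have q0 : 0 <= q by apply: sumr_ge0 => l _; case: (@pq_ge0 R (e l)).
have pqE : p + q = E1 i.
  rewrite /p /q -big_split /E1; apply: eq_bigr => l _ /=; rewrite /e; by field.
have pqD : p - q = \sum_l e l.
  rewrite /p /q -sumrB; apply: eq_bigr => l _ /=; by field.
set lo := colmin V 0 j. set hi := colmax V 0 j.
set O := Om i j.
have Up : \sum_l e l * (O - V l j) <= p * (O - lo) + q * (hi - O).
  rewrite /p /q !mulr_suml -big_split; apply: ler_sum => l _ /=.
  by case: (@term_bd R (e l) O _ _ _ (Vmin l j) (Vmax l j)).
have Lo : - (p * (hi - O) + q * (O - lo)) <= \sum_l e l * (O - V l j).
  rewrite /p /q !mulr_suml -big_split -sumrN; apply: ler_sum => l _ /=.
  by case: (@term_bd R (e l) O _ _ _ (Vmin l j) (Vmax l j)).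
set X := (\sum_l Ahat i l * V l j) / \sum_l Ahat i l.
have ident : (X - O) * (S i - p + q) = \sum_l e l * (O - V l j).
  have e1 : \sum_l Ahat i l * V l j = \sum_l A i l * V l j - \sum_l e l * V l j.
    rewrite -sumrB; apply: eq_bigr => l _; rewrite /e subE; ring.
  have e2 : \sum_l e l * (O - V l j) = O * \sum_l e l - \sum_l e l * V l j.
    rewrite mulr_sumr -sumrB; apply: eq_bigr => l _; ring.
  have e3 : S i - p + q = \sum_l Ahat i l by rewrite sumAh -/e -pqD; ring.
  have hO : O = (\sum_l A i l * V l j) / S i by rewrite /O Om_eq.
  have hSh := Sh_pos i. have hS := S_pos i.
  rewrite e3 e2 /X e1 hO -/(S i).
  rewrite (sumAh i) -/e.
  move: hSh; rewrite sumAh -/e => hSh.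
  field; rewrite ?gt_eqF //=.
have hpq : 3 * (p + q) < 2 * S i by rewrite pqE hlt.
have [Ol Or] := andP (Om_range i j).
have := @clip_bound R (S i) p q M O X lo hi (S_pos i) p0 q0 Ol Or (minM j) (maxM j) hpq.
rewrite ident => /(_ Lo Up).
have -> : Oh i j = Num.min (Num.max X lo) hi by rewrite /Oh clip_entry X_eq.
rewrite -/O => hb.
have hb2 : `|O - Num.min (Num.max X lo) hi| <= M * T.
  apply: le_trans hb _.
  have -> : 3 * M * (p + q) / S i = M * (3 * E1 i / S i) by rewrite pqE; field; rewrite gt_eqF.
  by rewrite ler_wpM2l // hT.
have hb3 := triv i j.
have EE : Oh i j = Num.min (Num.max X lo) hi by rewrite /Oh clip_entry X_eq.
rewrite -/O EE in hb3.
by case: (lerP T 2) => _ //; rewrite mulrC.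
Qed.
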